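(* Let $X$ be a standard connected coarse space and $A\subseteq X$. The following are equivalent: (1) $A$ is thin; (2) for all $x,y\in{}^*A\cap\mathrm{INF}(X)$, $x\sim_Xy$ implies $x=y$; (3) $G^c_X(x)\cap G^c_X(y)=\varnothing$ for all distinct $x,y\in{}^*A\cap\mathrm{INF}(X)$.
   Context: Nonstandard framework with transfer and sufficient saturation. Coarse structure $\mathcal{C}_X$: family of subsets of $X\times X$ containing the diagonal, closed under subsets, finite unions, inverses, compositions; connected if every singleton $\{(x,y)\}$ is controlled. Bounded sets: $B$ with $B\times B\in\mathcal{C}_X$; $\mathrm{INF}(X)={}^*X\setminus\bigcup_{B\text{ bounded}}{}^*B$. $x\sim_Xy$ iff $(x,y)\in{}^*E$ for some $E\in\mathcal{C}_X$; $G^c_X(x)=\{y\in{}^*X:x\sim_Xy\}$. $A$ is thin if for every $E\in\mathcal{C}_X$ there is a bounded $B\subseteq X$ with $E[x]\cap E[y]=\varnothing$ for all distinct $x,y\in A\setminus B$. *)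

(* Defs.v *)
(* plain Prop-valued sets.
   Nonstandard framework modelled as an ultrapower: hyperreal-style points of
   *X are functions I -> X, compared modulo an ultrafilter U on I. *)
From Stdlib Require Import List.
Import ListNotations.

Record ultrafilter {I : Type} (U : (I -> Prop) -> Prop) : Prop := {
  uf_full : U (fun _ => True);
  uf_nonempty : ~ U (fun _ => False);
  uf_mono : forall S T : I -> Prop, U S -> (forall i, S i -> T i) -> U T;
  uf_inter : forall S T : I -> Prop, U S -> U T -> U (fun i => S i /\ T i);
  uf_ultra : forall S : I -> Prop, U S \/ U (fun i => ~ S i)
}.

(* "Sufficient saturation": the ultrapower is an enlargement w.r.t. subsets
   of T: every family of subsets of T with the finite intersection property
   has a common point in the nonstandard extensions of its members. *)
Definition fip {T : Type} (F : (T -> Prop) -> Prop) : Prop :=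
  forall l : list (T -> Prop), Forall F l -> exists t, Forall (fun S => S t) l.

Definition enlargement (I T : Type) (U : (I -> Prop) -> Prop) : Prop :=
  forall F : (T -> Prop) -> Prop, fip F ->
    exists f : I -> T, forall S, F S -> U (fun i => S (f i)).

Definition star {I X : Type} (U : (I -> Prop) -> Prop) (A : X -> Prop)
  (x : I -> X) : Prop := U (fun i => A (x i)).

Definition nseq {I X : Type} (U : (I -> Prop) -> Prop) (x y : I -> X) : Prop :=
  U (fun i => x i = y i).

Definition rel_comp {X : Type} (E F : X -> X -> Prop) : X -> X -> Prop :=
  fun x z => exists y, E x y /\ F y z.

Record coarse_structure {X : Type} (C : (X -> X -> Prop) -> Prop) : Prop := {
  cs_diag : C (fun x y => x = y);
  cs_sub : forall E F : X -> X -> Prop, C E -> (forall x y, F x y -> E x y) -> C F;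
  cs_union : forall E F, C E -> C F -> C (fun x y => E x y \/ F x y);
  cs_inv : forall E, C E -> C (fun x y => E y x);
  cs_comp : forall E F, C E -> C F -> C (rel_comp E F)
}.

Definition connected {X : Type} (C : (X -> X -> Prop) -> Prop) : Prop :=
  forall a b : X, C (fun x y => x = a /\ y = b).

Definition bounded {X : Type} (C : (X -> X -> Prop) -> Prop) (B : X -> Prop) : Prop :=
  C (fun x y => B x /\ B y).

Definition INF {I X : Type} (U : (I -> Prop) -> Prop) (C : (X -> X -> Prop) -> Prop)
  (x : I -> X) : Prop :=
  forall B, bounded C B -> ~ star U B x.

Definition csim {I X : Type} (U : (I -> Prop) -> Prop) (C : (X -> X -> Prop) -> Prop)
  (x y : I -> X) : Prop :=
  exists E, C E /\ U (fun i => E (x i) (y i)).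

Definition galaxy {I X : Type} (U : (I -> Prop) -> Prop) (C : (X -> X -> Prop) -> Prop)
  (x : I -> X) : (I -> X) -> Prop := fun y => csim U C x y.

Definition thin {X : Type} (C : (X -> X -> Prop) -> Prop) (A : X -> Prop) : Prop :=
  forall E, C E -> exists B, bounded C B /\
    forall x y, A x -> ~ B x -> A y -> ~ B y -> x <> y ->
      ~ (exists z, E x z /\ E y z).

(* Main.v *)
Require Import Defs.
From Stdlib Require Import List Classical.
Import ListNotations.

Lemma bounded_union {X : Type} (C : (X -> X -> Prop) -> Prop)
  (HC : coarse_structure C) (Hconn : connected C) (B1 B2 : X -> Prop) :
  bounded C B1 -> bounded C B2 -> bounded C (fun x => B1 x \/ B2 x).
Proof.
  unfold bounded; intros H1 H2.
  destruct (classic (exists a, B1 a)) as [[a1 Ha1]|N1].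
  2:{ apply (cs_sub _ HC _ _ H2). intros x y [[h|h] [h'|h']]; solve [auto | exfalso; apply N1; exists x; auto | exfalso; apply N1; exists y; auto]. }
  destruct (classic (exists a, B2 a)) as [[a2 Ha2]|N2].
  2:{ apply (cs_sub _ HC _ _ H1). intros x y [[h|h] [h'|h']]; solve [auto | exfalso; apply N2; exists x; auto | exfalso; apply N2; exists y; auto]. }
  set (M := rel_comp (rel_comp (fun x y => B1 x /\ B1 y) (fun x y => x = a1 /\ y = a2))
                     (fun x y => B2 x /\ B2 y)).
  assert (HM : C M).
  { apply (cs_comp _ HC); [apply (cs_comp _ HC)|]; auto. }
  assert (HMi := cs_inv _ HC _ HM).
  assert (HK := cs_union _ HC _ _ (cs_union _ HC _ _ H1 H2) (cs_union _ HC _ _ HM HMi)).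
  apply (cs_sub _ HC _ _ HK). intros x y [[h|h] [h'|h']].
  - left; left; auto.
  - right; left. exists a2; split; [exists a1; split; auto|]; auto.
  - right; right. exists a2; split; [exists a1; split; auto|]; auto.
  - left; right; auto.
Qed.

Theorem mainTheorem17 (I X : Type) (U : (I -> Prop) -> Prop)
  (C : (X -> X -> Prop) -> Prop) (A : X -> Prop)
  (HU : ultrafilter U) (Hsat : enlargement I (X * X) U)
  (HC : coarse_structure C) (Hconn : connected C) :
  let P1 := thin C A in
  let P2 := forall x y : I -> X,
      star U A x -> INF U C x -> star U A y -> INF U C y ->
      csim U C x y -> nseq U x y in
  let P3 := forall x y : I -> X,
      star U A x -> INF U C x -> star U A y -> INF U C y ->
      ~ nseq U x y ->
      forall z, ~ (galaxy U C x z /\ galaxy U C y z) in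
  (P1 <-> P2) /\ (P2 <-> P3).
Proof.
  intros P1 P2 P3.
  assert (INFc : forall B x, bounded C B -> INF U C x -> U (fun i => ~ B (x i))).
  { intros B x HB Hx. destruct (uf_ultra _ HU (fun i => B (x i))) as [h|h]; auto.
    exfalso; exact (Hx B HB h). }
  split; split.
  -
    intros Hth x y Ax Ix Ay Iy [E [HE HExy]].
    destruct (Hth _ (cs_union _ HC _ _ HE (cs_diag _ HC))) as [B [HB Hd]].
    pose proof (INFc B x HB Ix) as Nx. pose proof (INFc B y HB Iy) as Ny.
    unfold nseq. unfold star in *.
    pose proof (uf_inter _ HU _ _ Ax (uf_inter _ HU _ _ Ay (uf_inter _ HU _ _ Nx
       (uf_inter _ HU _ _ Ny HExy)))) as HS.
    apply (uf_mono _ HU _ _ HS). intros i (a & b & c & d & e).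
    apply NNPP; intro hne. apply (Hd _ _ a c b d hne). exists (y i); split; auto.
  -
    intros H2 E HE. apply NNPP; intro Hno.
    set (SB := fun (B : X -> Prop) (p : X * X) =>
      A (fst p) /\ A (snd p) /\ ~ B (fst p) /\ ~ B (snd p) /\ fst p <> snd p /\
      exists z, E (fst p) z /\ E (snd p) z).
    assert (Hne : forall B, bounded C B -> exists p, SB B p).
    { intros B HB. apply NNPP; intro N. apply Hno. exists B; split; auto.
      intros x y a b c d e f. apply N. exists (x, y). unfold SB; simpl; tauto. }
    set (F := fun S : X * X -> Prop => exists B, bounded C B /\ S = SB B).
    assert (Hfip : fip F).
    { intros l Hl.
      assert (exists B0, bounded C B0 /\ Forall (fun S => forall p, SB B0 p -> S p) l) as [B0 [HB0 HF]].
      { induction Hl as [|S l HS Hl IH].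
        - exists (fun _ => False); split; [|constructor].
          apply (cs_sub _ HC _ _ (cs_diag _ HC)). intros x y [[] _].
        - destruct IH as [B0 [HB0 HF]]. destruct HS as [B [HB ->]].
          exists (fun x => B x \/ B0 x); split.
          + apply bounded_union; auto.
          + constructor.
            * intros p (a&b&c&d&e&f); repeat split; auto; tauto.
            * eapply Forall_impl; [|exact HF]. intros S' HS' p (a&b&c&d&e&f).
              apply HS'; repeat split; auto; tauto. }
      destruct (Hne B0 HB0) as [p Hp]. exists p.
      eapply Forall_impl; [|exact HF]. simpl; auto. }
    destruct (Hsat F Hfip) as [f Hf].
    assert (HfB : forall B, bounded C B -> U (fun i => SB B (f i))).
    { intros B HB. apply Hf. exists B; auto. }
    assert (Hb0 : bounded C (fun _ => False)).
    { apply (cs_sub _ HC _ _ (cs_diag _ HC)). intros x y [[] _]. }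
    pose proof (HfB _ Hb0) as H0.
    set (x := fun i => fst (f i)). set (y := fun i => snd (f i)).
    assert (INFx : INF U C x).
    { intros B HB Hs. apply (uf_nonempty _ HU).
      apply (uf_mono _ HU _ _ (uf_inter _ HU _ _ Hs (HfB B HB))).
      intros i [h (_&_&h'&_)]. exact (h' h). }
    assert (INFy : INF U C y).
    { intros B HB Hs. apply (uf_nonempty _ HU).
      apply (uf_mono _ HU _ _ (uf_inter _ HU _ _ Hs (HfB B HB))).
      intros i [h (_&_&_&h'&_)]. exact (h' h). }
    assert (Hn := H2 x y).
    apply (uf_nonempty _ HU).
    apply (uf_mono _ HU _ _ (uf_inter _ HU _ _ H0 (Hn
      ltac:(apply (uf_mono _ HU _ _ H0); intros i h; apply h) INFx
      ltac:(apply (uf_mono _ HU _ _ H0); intros i h; apply h) INFy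
      ltac:(exists (rel_comp E (fun a b => E b a)); split;
              [apply (cs_comp _ HC); [|apply (cs_inv _ HC)]; auto
              |apply (uf_mono _ HU _ _ H0); intros i (_&_&_&_&_&z&h1&h2);
               exists z; split; auto])))).
    intros i [(_&_&_&_&h&_) h']. exact (h h').
  -
    intros H2 x y Ax Ix Ay Iy Nxy z [[E1 [HE1 H1]] [E2 [HE2 Hz]]].
    apply Nxy. apply H2; auto.
    exists (rel_comp E1 (fun a b => E2 b a)); split.
    + apply (cs_comp _ HC); [|apply (cs_inv _ HC)]; auto.
    + apply (uf_mono _ HU _ _ (uf_inter _ HU _ _ H1 Hz)).
      intros i [a b]; exists (z i); auto.
  -
    intros H3 x y Ax Ix Ay Iy Hs. apply NNPP; intro N.
    apply (H3 x y Ax Ix Ay Iy N y). split; auto.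
    exists (fun a b => a = b); split; [apply (cs_diag _ HC)|].
    apply (uf_mono _ HU _ _ (uf_full _ HU)); auto.
Qed.
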